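(* For every BAO-complex spi-rule logic $rL$, the following are equivalent: (i) $rL$ is complex; (ii) $rL$ is globally complete; (iii) $rL$ is BAO-rule-conservative; (iv) $rL$ is BAO-embeddable.
   Context: Fix a signature $\mathcal R$ with diamonds $\Diamond_R$. Sp-formulas: built from propositional variables and $\top$ by $\wedge$ and the $\Diamond_R$; sp-implications $\sigma\to\tau$. A SLO is an algebra $(A,\wedge,\top,\Diamond_R)_R$ with $(A,\wedge,\top)$ a meet-semilattice with top and each $\Diamond_R$ monotone. A BAO is an algebra $(A,\wedge,\vee,-,\bot,\top,\Diamond_R)_R$ that is a Boolean algebra with operators satisfying $\Diamond_R\bot=\bot$ and $\Diamond_R(a\vee b)=\Diamond_Ra\vee\Diamond_Rb$; its sp-type reduct is $(A,\wedge,\top,\Diamond_R)_R$. For a frame $\mathfrak F=(W,R^{\mathfrak F})_R$, $\mathfrak F^\star=(2^W,\cap,W,\Diamond_R^+)_R$ with $\Diamond_R^+X=\{w\mid\exists v\in X,(w,v)\in R^{\mathfrak F}\}$ (the sp-type reduct of the full complex algebra of $\mathfrak F$); $\mathsf{CA}=\{\mathfrak F^\star\mid\mathfrak F\text{ a frame}\}$. An embedding is an injective map preserving $\wedge,\top$ and all $\Diamond_R$. An spi-rule is $\rho=\frac{\iota_1,\dots,\iota_n}{\iota}$ with sp-implications $\iota_1,\dots,\iota_n,\iota$ ($n\ge0$). An algebra $\mathfrak A$ with an sp-type reduct validates $\rho$ if for every valuation $\mathfrak a$ in $\mathfrak A$: whenever $\sigma_i[\mathfrak a]\le\tau_i[\mathfrak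 a]$ for all $\iota_i=(\sigma_i\to\tau_i)$, also $\sigma[\mathfrak a]\le\tau[\mathfrak a]$ for $\iota=(\sigma\to\tau)$. A rule holds in a Kripke model if $\iota$ is true at all points whenever each $\iota_i$ is true at all points; a frame validates $\rho$ if $\rho$ holds in every model over it. An spi-rule logic is a set $rL=\{\rho\mid\mathfrak A\models\rho\text{ for all }\mathfrak A\in\mathcal K\}$ for some class $\mathcal K$ of SLOs. $\mathsf{Kr}_{rL}$ is the class of frames validating all rules in $rL$. For a class $\mathcal C$ of algebras with sp-type reducts, $\mathcal C_{rL}=\{\mathfrak A\in\mathcal C\mid\mathfrak A\models\rho\ \forall\rho\in rL\}$ and $rL\models_{\mathcal C}\rho$ iff every $\mathfrak A\in\mathcal C_{rL}$ validates $\rho$; $\mathsf{SLO}$ and $\mathsf{BAO}$ denote the classes of all SLOs and all BAOs. $rL$ is $\mathcal C$-embeddable if every SLO in $\mathsf{SLO}_{rL}$ embeds into the sp-type reduct of some $\mathfrak B\in\mathcal C_{rL}$; $\mathcal C$-rule-conservative if $rL\models_{\mathcal C}\rho$ implies $rL\models_{\mathsf{SLO}}\rho$ for every spi-rule $\rho$. $rL$ is complex if it is $\mathsf{CA}$-embeddable, globally complete if it is $\mathsf{CA}$-rule-conservative, and BAO-complex if the sp-type reduct of every $\mathfrak A\in\mathsf{BAO}_{rL}$ embeds into some $\mathfrak F^\star$ with $\mathfrak F\in\mathsf{Kr}_{rL}$. *)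

(* Defs.v *)
From Stdlib Require Import List.
Import ListNotations.

Section SpiLogic.
Variable Sig : Type.

Inductive spf : Type :=
| Var : nat -> spf
| Top : spf
| And : spf -> spf -> spf
| Dia : Sig -> spf -> spf.

Definition spimp : Type := (spf * spf)%type.

Record spirule : Type := mkRule { premises : list spimp; conclusion : spimp }.

Record spAlg : Type := mkSpAlg {
  car : Type;
  meet : car -> car -> car;
  top : car;
  dia : Sig -> car -> car }.

Definition le (A : spAlg) (a b : car A) : Prop := meet A a b = a.

Definition isSLO (A : spAlg) : Prop :=
  (forall a, meet A a a = a) /\
  (forall a b, meet A a b = meet A b a) /\
  (forall a b c, meet A a (meet A b c) = meet A (meet A a b) c) /\
  (forall a, meet A a (top A) = a) /\
  (forall R a b, le A a b -> le A (dia A R a) (dia A R b)).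

(** the sp-algebra A is the sp-type reduct of a BAO with join j, complement c
    and bottom z *)
Definition isBAO (A : spAlg) (j : car A -> car A -> car A) (c : car A -> car A)
    (z : car A) : Prop :=
  (forall a b, meet A a b = meet A b a) /\
  (forall a b, j a b = j b a) /\
  (forall a b x, meet A a (meet A b x) = meet A (meet A a b) x) /\
  (forall a b x, j a (j b x) = j (j a b) x) /\
  (forall a b, meet A a (j a b) = a) /\
  (forall a b, j a (meet A a b) = a) /\
  (forall a b x, meet A a (j b x) = j (meet A a b) (meet A a x)) /\
  (forall a, meet A a (top A) = a) /\
  (forall a, j a z = a) /\
  (forall a, meet A a (c a) = z) /\
  (forall a, j a (c a) = top A) /\
  (forall R, dia A R z = z) /\
  (forall R a b, dia A R (j a b) = j (dia A R a) (dia A R b)).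

Fixpoint eval (A : spAlg) (v : nat -> car A) (s : spf) : car A :=
  match s with
  | Var n => v n
  | Top => top A
  | And s t => meet A (eval A v s) (eval A v t)
  | Dia R s => dia A R (eval A v s)
  end.

Definition holds_imp (A : spAlg) (v : nat -> car A) (i : spimp) : Prop :=
  le A (eval A v (fst i)) (eval A v (snd i)).

Definition validates (A : spAlg) (r : spirule) : Prop :=
  forall v : nat -> car A,
    (forall i, In i (premises r) -> holds_imp A v i) -> holds_imp A v (conclusion r).

Definition validates_all (A : spAlg) (rL : spirule -> Prop) : Prop :=
  forall r, rL r -> validates A r.

Definition is_spi_logic (rL : spirule -> Prop) : Prop :=
  exists K : spAlg -> Prop,
    (forall A, K A -> isSLO A) /\
    (forall r, rL r <-> (forall A, K A -> validates A r)).

Record frame : Type := mkFrame { W : Type; rel : Sig -> W -> W -> Prop }.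

Fixpoint ktrue (F : frame) (V : nat -> W F -> Prop) (w : W F) (s : spf) : Prop :=
  match s with
  | Var n => V n w
  | Top => True
  | And s t => ktrue F V w s /\ ktrue F V w t
  | Dia R s => exists u, rel F R w u /\ ktrue F V u s
  end.

Definition ktrue_imp (F : frame) (V : nat -> W F -> Prop) (w : W F) (i : spimp) : Prop :=
  ktrue F V w (fst i) -> ktrue F V w (snd i).

Definition rule_holds_model (F : frame) (V : nat -> W F -> Prop) (r : spirule) : Prop :=
  (forall i, In i (premises r) -> forall w, ktrue_imp F V w i) ->
  forall w, ktrue_imp F V w (conclusion r).

Definition frame_validates (F : frame) (r : spirule) : Prop :=
  forall V, rule_holds_model F V r.

Definition Kr (rL : spirule -> Prop) (F : frame) : Prop :=
  forall r, rL r -> frame_validates F r.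

(** F^star : the sp-type reduct of the full complex algebra of F *)
Definition Fstar (F : frame) : spAlg :=
  {| car := W F -> Prop;
     meet := fun X Y w => X w /\ Y w;
     top := fun _ => True;
     dia := fun R X w => exists u, X u /\ rel F R w u |}.

(** classes of algebras with sp-type reducts (given by their reducts) *)
Definition SLOc : spAlg -> Prop := isSLO.
Definition BAOc (A : spAlg) : Prop := exists j c z, isBAO A j c z.
Definition CA (A : spAlg) : Prop := exists F : frame, A = Fstar F.

Definition embedding (A B : spAlg) (f : car A -> car B) : Prop :=
  (forall a b, f a = f b -> a = b) /\
  (forall a b, f (meet A a b) = meet B (f a) (f b)) /\
  f (top A) = top B /\
  (forall R a, f (dia A R a) = dia B R (f a)).

Definition embeds (A B : spAlg) : Prop := exists f, embedding A B f.

Definition consequence (C : spAlg -> Prop) (rL : spirule -> Prop) (r : spirule) : Prop :=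
  forall A, C A -> validates_all A rL -> validates A r.

Definition C_embeddable (C : spAlg -> Prop) (rL : spirule -> Prop) : Prop :=
  forall A, SLOc A -> validates_all A rL ->
    exists B, C B /\ validates_all B rL /\ embeds A B.

Definition C_rule_conservative (C : spAlg -> Prop) (rL : spirule -> Prop) : Prop :=
  forall r, consequence C rL r -> consequence SLOc rL r.

Definition complex (rL : spirule -> Prop) : Prop := C_embeddable CA rL.
Definition globally_complete (rL : spirule -> Prop) : Prop := C_rule_conservative CA rL.

Definition BAO_complex (rL : spirule -> Prop) : Prop :=
  forall A, BAOc A -> validates_all A rL ->
    exists F : frame, Kr rL F /\ embeds A (Fstar F).

End SpiLogic.

(* Main.v *)
Require Import Defs.
From Stdlib Require Import List FunctionalExtensionality PropExtensionality ProofIrrelevance ClassicalEpsilon Classical.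
Import ListNotations.

Local Arguments car {Sig}. Local Arguments meet {Sig}. Local Arguments top {Sig}.
Local Arguments dia {Sig}. Local Arguments le {Sig}. Local Arguments eval {Sig}.
Local Arguments holds_imp {Sig}. Local Arguments validates {Sig}.
Local Arguments validates_all {Sig}. Local Arguments isSLO {Sig}. Local Arguments isBAO {Sig}.
Local Arguments Var {Sig}. Local Arguments Top {Sig}. Local Arguments And {Sig}. Local Arguments Dia {Sig}.
Local Arguments mkRule {Sig}. Local Arguments premises {Sig}. Local Arguments conclusion {Sig}.
Local Arguments W {Sig}. Local Arguments rel {Sig}. Local Arguments ktrue {Sig}.
Local Arguments ktrue_imp {Sig}. Local Arguments frame_validates {Sig}. Local Arguments Kr {Sig}.
Local Arguments Fstar {Sig}. Local Arguments embedding {Sig}. Local Arguments embeds {Sig}.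
Local Arguments consequence {Sig}. Local Arguments mkSpAlg {Sig}. Local Arguments rule_holds_model {Sig}.

Lemma eval_emb Sig (A B : spAlg Sig) f (Hf : embedding A B f) v s :
  f (eval A v s) = eval B (fun n => f (v n)) s.
Proof.
  destruct Hf as [Hi [Hm [Ht Hd]]].
  induction s; simpl; try congruence.
Qed.

Lemma emb_reflect Sig (A B : spAlg Sig) r : embeds A B -> validates B r -> validates A r.
Proof.
  intros [f Hf] HB v Hp.
  pose proof Hf as [Hi [Hm [Ht Hd]]].
  assert (Hle : forall a b, le A a b <-> le B (f a) (f b)).
  { intros a b; unfold le; split; intro H.
    - rewrite <- Hm; congruence.
    - apply Hi; rewrite Hm; exact H. }
  unfold holds_imp. apply Hle. rewrite !(eval_emb _ _ _ _ Hf).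
  apply HB. intros i Hi'. specialize (Hp i Hi'). unfold holds_imp in Hp.
  apply Hle in Hp. rewrite !(eval_emb _ _ _ _ Hf) in Hp. exact Hp.
Qed.

Lemma emb_comp Sig (A B C : spAlg Sig) : embeds A B -> embeds B C -> embeds A C.
Proof.
  intros [f [Hi [Hm [Ht Hd]]]] [g [Hi' [Hm' [Ht' Hd']]]].
  exists (fun a => g (f a)). repeat split.
  - intros a b H; apply Hi, Hi', H.
  - intros a b; rewrite Hm, Hm'; reflexivity.
  - rewrite Ht, Ht'; reflexivity.
  - intros R a; rewrite Hd, Hd'; reflexivity.
Qed.

Lemma pe (P Q : Prop) : (P <-> Q) -> P = Q.
Proof. apply propositional_extensionality. Qed.

Lemma Fstar_BAO Sig (F : frame Sig) : BAOc Sig (Fstar F).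
Proof.
  exists (fun X Y w => X w \/ Y w), (fun X w => ~ X w), (fun _ => False).
  unfold isBAO; simpl.
  repeat split; intros; try (apply functional_extensionality; intro w; apply pe);
    try tauto; try firstorder.

Qed.

Lemma eval_Fstar Sig (F : frame Sig) v s w :
  eval (Fstar F) v s w <-> ktrue F v w s.
Proof.
  revert w; induction s; intro w; simpl; try tauto.
  - rewrite IHs1, IHs2; tauto.
  - split; intros [u Hu]; exists u; rewrite IHs in *; tauto.
Qed.

Lemma le_Fstar Sig (F : frame Sig) v i :
  holds_imp (Fstar F) v i <-> forall w, ktrue_imp F v w i.
Proof.
  unfold holds_imp, le, ktrue_imp. split.
  - intros H w. rewrite <- !eval_Fstar. intro H1.
    assert (H2 := equal_f H w). simpl in H2. rewrite <- H2 in H1. tauto.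
  - intros H. apply functional_extensionality; intro w; apply pe. simpl.
    specialize (H w). rewrite <- !eval_Fstar in H. tauto.
Qed.

Lemma Kr_val Sig rL (F : frame Sig) : Kr rL F -> validates_all (Fstar F) rL.
Proof.
  intros HK r Hr v Hp. apply le_Fstar. apply (HK r Hr v).
  intros i Hi. apply le_Fstar. apply Hp, Hi.
Qed.

Inductive tm (Sig X : Type) : Type :=
| gen : X -> tm Sig X
| tmeet : tm Sig X -> tm Sig X -> tm Sig X
| tjoin : tm Sig X -> tm Sig X -> tm Sig X
| tcomp : tm Sig X -> tm Sig X
| tbot : tm Sig X
| ttop : tm Sig X
| tdia : Sig -> tm Sig X -> tm Sig X.
Arguments gen {Sig X}. Arguments tmeet {Sig X}. Arguments tjoin {Sig X}.
Arguments tcomp {Sig X}. Arguments tbot {Sig X}. Arguments ttop {Sig X}. Arguments tdia {Sig X}.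

Inductive fact (Sig X : Type) : Type :=
| FMeet : X -> X -> fact Sig X
| FTop : fact Sig X
| FDia : Sig -> X -> fact Sig X.
Arguments FMeet {Sig X}. Arguments FTop {Sig X}. Arguments FDia {Sig X}.

Fixpoint teval {Sig X} (u : nat -> tm Sig X) (s : spf Sig) : tm Sig X :=
  match s with
  | Var n => u n
  | Top => ttop
  | And s t => tmeet (teval u s) (teval u t)
  | Dia R s => tdia R (teval u s)
  end.

Inductive drv Sig (A : spAlg Sig) (rL : spirule Sig -> Prop) (G : fact Sig (car A) -> Prop)
  : tm Sig (car A) -> tm Sig (car A) -> Prop :=
| d_refl t : drv Sig A rL G t t
| d_sym t s : drv Sig A rL G t s -> drv Sig A rL G s t
| d_trans t s u : drv Sig A rL G t s -> drv Sig A rL G s u -> drv Sig A rL G t u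
| d_meet t t' s s' : drv Sig A rL G t t' -> drv Sig A rL G s s' -> drv Sig A rL G (tmeet t s) (tmeet t' s')
| d_join t t' s s' : drv Sig A rL G t t' -> drv Sig A rL G s s' -> drv Sig A rL G (tjoin t s) (tjoin t' s')
| d_comp t t' : drv Sig A rL G t t' -> drv Sig A rL G (tcomp t) (tcomp t')
| d_dia R t t' : drv Sig A rL G t t' -> drv Sig A rL G (tdia R t) (tdia R t')
| a1 a b : drv Sig A rL G (tmeet a b) (tmeet b a)
| a2 a b : drv Sig A rL G (tjoin a b) (tjoin b a)
| a3 a b x : drv Sig A rL G (tmeet a (tmeet b x)) (tmeet (tmeet a b) x)
| a4 a b x : drv Sig A rL G (tjoin a (tjoin b x)) (tjoin (tjoin a b) x)
| a5 a b : drv Sig A rL G (tmeet a (tjoin a b)) a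
| a6 a b : drv Sig A rL G (tjoin a (tmeet a b)) a
| a7 a b x : drv Sig A rL G (tmeet a (tjoin b x)) (tjoin (tmeet a b) (tmeet a x))
| a8 a : drv Sig A rL G (tmeet a ttop) a
| a9 a : drv Sig A rL G (tjoin a tbot) a
| a10 a : drv Sig A rL G (tmeet a (tcomp a)) tbot
| a11 a : drv Sig A rL G (tjoin a (tcomp a)) ttop
| a12 R : drv Sig A rL G (tdia R tbot) tbot
| a13 R a b : drv Sig A rL G (tdia R (tjoin a b)) (tjoin (tdia R a) (tdia R b))
| f_meet a b : G (FMeet a b) -> drv Sig A rL G (gen (meet A a b)) (tmeet (gen a) (gen b))
| f_top : G FTop -> drv Sig A rL G (gen (top A)) ttop
| f_dia R a : G (FDia R a) -> drv Sig A rL G (gen (dia A R a)) (tdia R (gen a))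
| d_rule r u : rL r ->
    (forall i, In i (premises r) ->
       drv Sig A rL G (tmeet (teval u (fst i)) (teval u (snd i))) (teval u (fst i))) ->
    drv Sig A rL G (tmeet (teval u (fst (conclusion r))) (teval u (snd (conclusion r))))
                   (teval u (fst (conclusion r))).

Lemma drv_weak Sig A rL (G G' : fact Sig (car A) -> Prop) t s :
  (forall f, G f -> G' f) -> drv Sig A rL G t s -> drv Sig A rL G' t s.
Proof.
  intros HG H; induction H; try (econstructor; eauto; fail).
Qed.

Lemma combine_lists {X F : Type} (ps : list X) (Q : X -> (F -> Prop) -> Prop)
  (mono : forall x (G G' : F -> Prop), (forall f, G f -> G' f) -> Q x G -> Q x G') :
  (forall i, In i ps -> exists l, Q i (fun f => In f l)) ->
  exists l, forall i, In i ps -> Q i (fun f => In f l).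
Proof.
  induction ps as [|p ps IH]; intro H.
  - exists []; intros i [].
  - destruct (H p (or_introl eq_refl)) as [l0 H0].
    destruct IH as [l Hl]. { intros i Hi; apply H; right; exact Hi. }
    exists (l0 ++ l). intros i [<-|Hi].
    + eapply mono; [|exact H0]. intros f Hf; apply in_or_app; left; exact Hf.
    + eapply mono; [|exact (Hl i Hi)]. intros f Hf; apply in_or_app; right; exact Hf.
Qed.

Lemma drv_finite Sig A rL (G : fact Sig (car A) -> Prop) t s :
  drv Sig A rL G t s -> exists l, drv Sig A rL (fun f => In f l) t s.
Proof.
  intro H; induction H;
    try (exists []; constructor; fail);
    try (destruct IHdrv as [l Hl]; exists l; constructor; exact Hl; fail);
    try (match goal with
         | H : _ ?f |- _ => exists [f]; constructor; left; reflexivity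
         end; fail).
  - destruct IHdrv1 as [l1 H1], IHdrv2 as [l2 H2]; exists (l1 ++ l2).
    apply d_trans with s; eapply drv_weak; eauto;
      intros f Hf; apply in_or_app; auto.
  - destruct IHdrv1 as [l1 H1], IHdrv2 as [l2 H2]; exists (l1 ++ l2).
    apply d_meet; eapply drv_weak; eauto; intros f Hf; apply in_or_app; auto.
  - destruct IHdrv1 as [l1 H1], IHdrv2 as [l2 H2]; exists (l1 ++ l2).
    apply d_join; eapply drv_weak; eauto; intros f Hf; apply in_or_app; auto.
  - destruct (combine_lists (premises r)
      (fun i G => drv Sig A rL G (tmeet (teval u (fst i)) (teval u (snd i))) (teval u (fst i))))
      as [l Hl].
    + intros; eapply drv_weak; eauto.
    + exact H1.
    + exists l; apply d_rule; auto.
Qed.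

Definition TT {Y : Type} : Y -> Prop := fun _ => True.

Definition cls Sig A rL (t : tm Sig (car A)) : tm Sig (car A) -> Prop :=
  fun s => drv Sig A rL TT t s.

Definition Qcar Sig A rL : Type :=
  { P : tm Sig (car A) -> Prop | exists t, P = cls Sig A rL t }.

Definition mk Sig A rL (t : tm Sig (car A)) : Qcar Sig A rL :=
  exist _ (cls Sig A rL t) (ex_intro _ t eq_refl).

Definition rep Sig A rL (X : Qcar Sig A rL) : tm Sig (car A) :=
  proj1_sig (constructive_indefinite_description _ (proj2_sig X)).

Lemma Q_ext Sig A rL (X Y : Qcar Sig A rL) : proj1_sig X = proj1_sig Y -> X = Y.
Proof.
  destruct X as [P HP], Y as [Q HQ]; simpl; intro E; subst Q.
  f_equal; apply proof_irrelevance.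
Qed.

Lemma mk_rep Sig A rL (X : Qcar Sig A rL) : mk Sig A rL (rep Sig A rL X) = X.
Proof.
  apply Q_ext. unfold rep, mk; simpl.
  destruct (constructive_indefinite_description _ (proj2_sig X)) as [t Ht]; simpl.
  symmetry; exact Ht.
Qed.

Lemma mk_surj Sig A rL (X : Qcar Sig A rL) : exists t, X = mk Sig A rL t.
Proof. exists (rep Sig A rL X); symmetry; apply mk_rep. Qed.

Lemma mk_eq Sig A rL t s : mk Sig A rL t = mk Sig A rL s <-> drv Sig A rL TT t s.
Proof.
  split.
  - intro E. apply (f_equal (@proj1_sig _ _)) in E. simpl in E.
    assert (H := equal_f E s). unfold cls in H. rewrite H. apply d_refl.
  - intro H. apply Q_ext; simpl. apply functional_extensionality; intro x.
    apply pe; unfold cls; split; intro H'.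
    + eapply d_trans; [apply d_sym, H| exact H'].
    + eapply d_trans; [exact H| exact H'].
Qed.

Lemma rep_mk Sig A rL t : drv Sig A rL TT (rep Sig A rL (mk Sig A rL t)) t.
Proof. apply mk_eq. apply mk_rep. Qed.

Definition Qmeet Sig A rL (X Y : Qcar Sig A rL) :=
  mk Sig A rL (tmeet (rep Sig A rL X) (rep Sig A rL Y)).
Definition Qjoin Sig A rL (X Y : Qcar Sig A rL) :=
  mk Sig A rL (tjoin (rep Sig A rL X) (rep Sig A rL Y)).
Definition Qcomp Sig A rL (X : Qcar Sig A rL) :=
  mk Sig A rL (tcomp (rep Sig A rL X)).
Definition Qdia Sig A rL (R : Sig) (X : Qcar Sig A rL) :=
  mk Sig A rL (tdia R (rep Sig A rL X)).

Lemma QmeetE Sig A rL t s : Qmeet Sig A rL (mk Sig A rL t) (mk Sig A rL s) = mk Sig A rL (tmeet t s).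
Proof. apply mk_eq; apply d_meet; apply rep_mk. Qed.
Lemma QjoinE Sig A rL t s : Qjoin Sig A rL (mk Sig A rL t) (mk Sig A rL s) = mk Sig A rL (tjoin t s).
Proof. apply mk_eq; apply d_join; apply rep_mk. Qed.
Lemma QcompE Sig A rL t : Qcomp Sig A rL (mk Sig A rL t) = mk Sig A rL (tcomp t).
Proof. apply mk_eq; apply d_comp; apply rep_mk. Qed.
Lemma QdiaE Sig A rL R t : Qdia Sig A rL R (mk Sig A rL t) = mk Sig A rL (tdia R t).
Proof. apply mk_eq; apply d_dia; apply rep_mk. Qed.

Definition QB Sig A rL : spAlg Sig :=
  mkSpAlg (Qcar Sig A rL) (Qmeet Sig A rL) (mk Sig A rL ttop) (Qdia Sig A rL).

Ltac solve_ax := first [apply a1|apply a2|apply a3|apply a4|apply a5|apply a6|apply a7|apply a8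
        |apply a9|apply a10|apply a11|apply a12|apply a13].

Lemma QB_BAO Sig A rL : isBAO (QB Sig A rL) (Qjoin Sig A rL) (Qcomp Sig A rL) (mk Sig A rL tbot).
Proof.
  unfold isBAO; simpl.
  repeat split; intros;
  repeat match goal with
  | X : Qcar Sig A rL |- _ => destruct (mk_surj Sig A rL X) as [? ->]; clear X
  end;
  rewrite ?QmeetE, ?QjoinE, ?QcompE, ?QdiaE, ?QmeetE, ?QjoinE, ?QcompE, ?QdiaE,
    ?QmeetE, ?QjoinE, ?QmeetE, ?QjoinE;
  apply mk_eq; first [apply d_refl | apply d_sym; solve_ax | solve_ax].
Qed.

Lemma eval_QB Sig A rL (v : nat -> Qcar Sig A rL) s :
  eval (QB Sig A rL) v s = mk Sig A rL (teval (fun n => rep Sig A rL (v n)) s).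
Proof.
  induction s; simpl.
  - symmetry; apply mk_rep.
  - reflexivity.
  - rewrite IHs1, IHs2; apply QmeetE.
  - rewrite IHs; apply QdiaE.
Qed.

Lemma QB_val Sig A rL : validates_all (QB Sig A rL) rL.
Proof.
  intros r Hr v Hp. unfold holds_imp, le. rewrite !eval_QB.
  change (meet (QB Sig A rL)) with (Qmeet Sig A rL). rewrite QmeetE.
  apply mk_eq. apply d_rule; auto.
  intros i Hi. specialize (Hp i Hi). unfold holds_imp, le in Hp.
  rewrite !eval_QB in Hp. change (meet (QB Sig A rL)) with (Qmeet Sig A rL) in Hp.
  rewrite QmeetE in Hp. apply mk_eq in Hp. exact Hp.
Qed.

Fixpoint tev Sig (A C : spAlg Sig) (j : car C -> car C -> car C) (c : car C -> car C) (z : car C)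
  (g : car A -> car C) (t : tm Sig (car A)) : car C :=
  match t with
  | gen x => g x
  | tmeet t s => meet C (tev Sig A C j c z g t) (tev Sig A C j c z g s)
  | tjoin t s => j (tev Sig A C j c z g t) (tev Sig A C j c z g s)
  | tcomp t => c (tev Sig A C j c z g t)
  | tbot => z
  | ttop => top C
  | tdia R t => dia C R (tev Sig A C j c z g t)
  end.

Definition fhold Sig (A C : spAlg Sig) (g : car A -> car C) (f : fact Sig (car A)) : Prop :=
  match f with
  | FMeet a b => g (meet A a b) = meet C (g a) (g b)
  | FTop => g (top A) = top C
  | FDia R a => g (dia A R a) = dia C R (g a)
  end.

Lemma tev_teval Sig A C j c z g (u : nat -> tm Sig (car A)) s :
  eval C (fun n => tev Sig A C j c z g (u n)) s = tev Sig A C j c z g (teval u s).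
Proof. induction s; simpl; congruence. Qed.

Lemma soundness Sig (A C : spAlg Sig) rL j c z (HB : isBAO C j c z)
  (HC : validates_all C rL) (g : car A -> car C) (G : fact Sig (car A) -> Prop)
  (HG : forall f, G f -> fhold Sig A C g f) t s :
  drv Sig A rL G t s -> tev Sig A C j c z g t = tev Sig A C j c z g s.
Proof.
  destruct HB as [b1 [b2 [b3 [b4 [b5 [b6 [b7 [b8 [b9 [b10 [b11 [b12 b13]]]]]]]]]]]].
  intro H; induction H; simpl;
    try (rewrite ?IHdrv, ?IHdrv1, ?IHdrv2; reflexivity);
    try (symmetry; assumption);
    try (etransitivity; eassumption);
    try (apply (HG _ H));
    try (solve [auto]).
  - assert (Hv := HC r H (fun n => tev Sig A C j c z g (u n))).
    unfold holds_imp, le in Hv. rewrite !tev_teval in Hv. apply Hv.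
    intros i Hi. unfold holds_imp, le. rewrite !tev_teval. apply H1, Hi.
Qed.

Fixpoint idx {X : Type} (x : X) (L : list X) : nat :=
  match L with
  | [] => 0
  | y :: L' => if excluded_middle_informative (x = y) then 0 else S (idx x L')
  end.

Arguments idx : simpl never.

Lemma nth_idx {X} (x d : X) L : In x L -> nth (idx x L) L d = x.
Proof.
  induction L as [|y L IH]; simpl; [intros []|]. unfold idx; fold (@idx X).
  intros H. destruct (excluded_middle_informative (x = y)) as [E|E].
  - auto.
  - apply IH. destruct H; [congruence|auto].
Qed.

Definition elems Sig (A : spAlg Sig) (f : fact Sig (car A)) : list (car A) :=
  match f with
  | FMeet x y => [x; y; meet A x y]
  | FTop => [top A]
  | FDia R x => [x; dia A R x]
  end.

Definition fimps Sig (A : spAlg Sig) (L : list (car A)) (f : fact Sig (car A)) : list (spimp Sig) :=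
  let V x := Var (Sig:=Sig) (idx x L) in
  match f with
  | FMeet x y => [(V (meet A x y), And (V x) (V y)); (And (V x) (V y), V (meet A x y))]
  | FTop => [(V (top A), Top); (Top, V (top A))]
  | FDia R x => [(V (dia A R x), Dia R (V x)); (Dia R (V x), V (dia A R x))]
  end.

Lemma BAO_idem Sig (C : spAlg Sig) j c z : isBAO C j c z -> forall a, meet C a a = a.
Proof.
  intros [b1 [b2 [b3 [b4 [b5 [b6 _]]]]]] a.
  rewrite <- (b6 a a) at 2. apply b5.
Qed.

Lemma BAO_antisym Sig (C : spAlg Sig) j c z : isBAO C j c z ->
  forall a b, le C a b -> le C b a -> a = b.
Proof.
  intros [b1 _] a b H1 H2. unfold le in *. transitivity (meet C a b); [symmetry; exact H1| rewrite b1; exact H2].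
Qed.

Lemma key Sig (A : spAlg Sig) rL
  (Hcons : C_rule_conservative Sig (BAOc Sig) rL)
  (HA : isSLO A) (HAv : validates_all A rL) l a b :
  drv Sig A rL (fun f => In f l) (gen a) (gen b) -> le A a b.
Proof.
  intro Hd.
  set (L := a :: b :: flat_map (elems Sig A) l).
  assert (HinL : forall f x, In f l -> In x (elems Sig A f) -> In x L).
  { intros f x Hf Hx. right; right. apply in_flat_map; eauto. }
  assert (HaL : In a L) by (left; reflexivity).
  assert (HbL : In b L) by (right; left; reflexivity).
  clearbody L.
  set (rho := mkRule (flat_map (fimps Sig A L) l) (Var (idx a L), Var (idx b L))).
  assert (Hc : consequence (BAOc Sig) rL rho).
  { intros C [j [c [z HB]]] HCv v Hp.
    set (g := fun x => v (idx x L)).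
    assert (HG : forall f, In f l -> fhold Sig A C g f).
    { intros f Hf.
      assert (Hp' : forall i, In i (fimps Sig A L f) -> holds_imp C v i).
      { intros i Hi; apply Hp; simpl; apply in_flat_map; eauto. }
      destruct f; simpl in *; unfold g;
        apply (BAO_antisym _ _ _ _ _ HB);
        [apply (Hp' _ (or_introl eq_refl)) | apply (Hp' _ (or_intror (or_introl eq_refl)))
        |apply (Hp' _ (or_introl eq_refl)) | apply (Hp' _ (or_intror (or_introl eq_refl)))
        |apply (Hp' _ (or_introl eq_refl)) | apply (Hp' _ (or_intror (or_introl eq_refl)))]. }
    assert (E := soundness Sig A C rL j c z HB HCv g _ HG _ _ Hd). simpl in E.
    unfold holds_imp, le; simpl. unfold g in E. rewrite E. eapply BAO_idem; eauto. }
  assert (Hs := Hcons rho Hc A HA HAv (fun n => nth n L (top A))).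
  destruct HA as [Hidem _].
  unfold holds_imp in Hs; simpl in Hs.
  rewrite (nth_idx a) in Hs by exact HaL.
  rewrite (nth_idx b) in Hs by exact HbL.
  apply Hs. intros i Hi. simpl in Hi. apply in_flat_map in Hi.
  destruct Hi as [f [Hf Hi]]. unfold holds_imp, le.
  destruct f; simpl in Hi;
  destruct Hi as [<-|[<-|[]]]; simpl;
  repeat rewrite nth_idx by (eapply HinL; [exact Hf| simpl; tauto]);
  apply Hidem.
Qed.

Lemma cons_to_emb Sig rL :
  C_rule_conservative Sig (BAOc Sig) rL -> C_embeddable Sig (BAOc Sig) rL.
Proof.
  intros Hcons A HA HAv.
  exists (QB Sig A rL). split; [|split].
  - exists (Qjoin Sig A rL), (Qcomp Sig A rL), (mk Sig A rL tbot). apply QB_BAO.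
  - apply QB_val.
  - exists (fun a => mk Sig A rL (gen a)). repeat split.
    + intros a b E. apply mk_eq in E.
      destruct (drv_finite _ _ _ _ _ _ E) as [l1 H1].
      destruct (drv_finite _ _ _ _ _ _ (d_sym _ _ _ _ _ _ E)) as [l2 H2].
      apply (key _ _ _ Hcons HA HAv) in H1. apply (key _ _ _ Hcons HA HAv) in H2.
      destruct HA as [_ [Hc _]]. unfold le in *.
      transitivity (meet A a b); [symmetry; exact H1| rewrite Hc; exact H2].
    + intros a b. simpl. change (Qmeet Sig A rL) with (Qmeet Sig A rL).
      rewrite QmeetE. apply mk_eq. apply f_meet. exact I.
    + simpl. apply mk_eq. apply f_top. exact I.
    + intros R a. simpl. rewrite QdiaE. apply mk_eq. apply f_dia. exact I.
Qed.

Theorem theorem9p12 (Sig : Type) (rL : spirule Sig -> Prop) :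
  is_spi_logic Sig rL ->
  BAO_complex Sig rL ->
  (complex Sig rL <-> globally_complete Sig rL) /\
  (globally_complete Sig rL <-> C_rule_conservative Sig (BAOc Sig) rL) /\
  (C_rule_conservative Sig (BAOc Sig) rL <-> C_embeddable Sig (BAOc Sig) rL).
Proof.
  intros _ Hbc.
  assert (i_ii : complex Sig rL -> globally_complete Sig rL).
  { intros Hc r Hr A HA HAv. destruct (Hc A HA HAv) as [B [HB [HBv He]]].
    apply (emb_reflect _ _ _ _ He). apply Hr; auto. }
  assert (ii_iii : globally_complete Sig rL -> C_rule_conservative Sig (BAOc Sig) rL).
  { intros Hg r Hr. apply Hg. intros A [F ->] HAv. apply Hr; auto. apply Fstar_BAO. }
  assert (iii_ii : C_rule_conservative Sig (BAOc Sig) rL -> globally_complete Sig rL).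
  { intros Hc r Hr. apply Hc. intros A HA HAv.
    destruct (Hbc A HA HAv) as [F [HK He]].
    apply (emb_reflect _ _ _ _ He). apply Hr.
    - exists F; reflexivity.
    - apply Kr_val, HK. }
  assert (iv_iii : C_embeddable Sig (BAOc Sig) rL -> C_rule_conservative Sig (BAOc Sig) rL).
  { intros He r Hr A HA HAv. destruct (He A HA HAv) as [B [HB [HBv Hemb]]].
    apply (emb_reflect _ _ _ _ Hemb). apply Hr; auto. }
  assert (iv_i : C_embeddable Sig (BAOc Sig) rL -> complex Sig rL).
  { intros He A HA HAv. destruct (He A HA HAv) as [B [HB [HBv Hemb]]].
    destruct (Hbc B HB HBv) as [F [HK He']].
    exists (Fstar F). split; [exists F; reflexivity|split].
    - apply Kr_val, HK.
    - eapply emb_comp; eauto. }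
  pose proof (cons_to_emb Sig rL) as iii_iv.
  split; [|split]; split; auto.
Qed.
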